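(* Let $G$ be a game state and let $P$ be a game path starting at $G$ that follows the Split-First Strategy. Let $m$ be any move that the Split-First Strategy permits at $G$. Then there exists a game path $P'$ starting at $G$ whose first move is $m$, which follows the Split-First Strategy, and which has the same length as $P$.
   Context: Fibonacci numbers are indexed by $F_1=1$, $F_2=2$, $F_{i+1}=F_i+F_{i-1}$. A game state is a finite multiset of Fibonacci numbers (tracked by index). The legal moves are: $C_1$: replace $F_1,F_1$ by $F_2$; for $i\ge 2$, $C_i$: replace $F_{i-1},F_i$ by $F_{i+1}$ (a ''combining move''); $S_2$: replace $F_2,F_2$ by $F_1,F_3$; for $i\ge 3$, $S_i$: replace $F_i,F_i$ by $F_{i-2},F_{i+1}$ (a ''splitting move''). Here $C_1$ is grouped with the splitting moves, and ''combining move'' means $C_i$ with $i\ge 2$. Every sequence of legal moves is finite. A game path from a state $G$ is a sequence of legal moves starting at $G$ and continuing until no legal move is available; its length is its number of moves. A game path follows the Split-First Strategy if at each state along it: whenever some splitting move or $C_1$ is available, the move taken is one of those (any choice); otherwise the move taken is the combining move $C_i$ ($i\ge 2$) with the smallest index $i$ among those available. *)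

(* Defs.v *)
From mathcomp Require Import all_boot.
Set Implicit Arguments. Unset Strict Implicit. Unset Printing Implicit Defensive.

(* A game state is a finite multiset of Fibonacci numbers F_i (i >= 1),
   represented by its multiplicity function: g i = number of copies of F_i. *)
Definition state := nat -> nat.

Definition game_state (g : state) : Prop :=
  g 0 = 0 /\ exists N, forall i, N <= i -> g i = 0.

(* Comb i = C_i (i >= 1; C_1 : F1,F1 -> F2; C_i : F_{i-1},F_i -> F_{i+1}),
   Split i = S_i (i >= 2; S_2 : F2,F2 -> F1,F3; S_i : F_i,F_i -> F_{i-2},F_{i+1}). *)
Inductive move := Comb of nat | Split of nat.

Definition legal (g : state) (m : move) : bool :=
  match m with
  | Comb i => if i == 1 then 2 <= g 1 else [&& 2 <= i, 1 <= g i.-1 & 1 <= g i]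
  | Split i => if i == 2 then 2 <= g 2 else (3 <= i) && (2 <= g i)
  end.

Definition removed (m : move) (j : nat) : nat :=
  match m with
  | Comb i => if i == 1 then 2 * (j == 1) else (j == i.-1) + (j == i)
  | Split i => 2 * (j == i)
  end.

Definition added (m : move) (j : nat) : nat :=
  match m with
  | Comb i => if i == 1 then nat_of_bool (j == 2) else nat_of_bool (j == i.+1)
  | Split i => if i == 2 then (j == 1) + (j == 3) else (j == i - 2) + (j == i.+1)
  end.

Definition apply_move (g : state) (m : move) : state :=
  fun j => g j - removed m j + added m j.

Definition terminal (g : state) : Prop := forall m, legal g m = false.

Definition split_class (m : move) : bool :=
  match m with Comb i => i == 1 | Split _ => true end.

Definition sf_ok (g : state) (m : move) : Prop :=
  legal g m /\
  ((exists m', legal g m' /\ split_class m') -> split_class m) /\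
  (~ (exists m', legal g m' /\ split_class m') ->
     exists i, m = Comb i /\ 2 <= i /\
       forall j, 2 <= j -> j < i -> legal g (Comb j) = false).

Fixpoint game_path (g : state) (ms : seq move) : Prop :=
  match ms with
  | [::] => terminal g
  | m :: ms' => legal g m /\ game_path (apply_move g m) ms'
  end.

Fixpoint follows_sf (g : state) (ms : seq move) : Prop :=
  match ms with
  | [::] => True
  | m :: ms' => sf_ok g m /\ follows_sf (apply_move g m) ms'
  end.

(* Main.v *)
Require Import Defs.
From mathcomp Require Import all_boot zify.
Set Implicit Arguments.
Lemma rem_le g m j : legal g m -> removed m j <= g j.
Proof.
case: m => i /=.
- have [_|ne] := eqVneq i 1; first by have [e|] := eqVneq j 1 => /=; [subst|]; lia.
  move=> /and3P [h1 h2 h3].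
  have [e1|n1] := eqVneq j i.-1; have [e2|n2] := eqVneq j i => /=; subst => /=; lia.
- have [e0|ne] := eqVneq i 2 => h; [|move/andP: h => [? ?]]; have [e|] := eqVneq j i => /=; try subst; lia.
Qed.
Lemma split_idx g i : legal g (Defs.Split i) -> 2 <= i.
Proof. rewrite /=; have [->|] := eqVneq i 2 => // _; case/andP; lia. Qed.
Arguments split_idx {g i}.
Lemma disj g m m0 j : legal g m -> legal g m0 -> split_class m -> split_class m0 -> m <> m0 ->
  removed m j = 0 \/ removed m0 j = 0.
Proof.
case: m => i; case: m0 => i0 => l1 l2 /= h1 h2 ne.
- by move/eqP: h1 ne => ->; move/eqP: h2 => ->.
- have := split_idx l2; move/eqP: h1 => -> /=.
  have [e|] := eqVneq j 1; have [e'|] := eqVneq j i0 => /=; try subst; lia.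
- have := split_idx l1; move/eqP: h2 => -> /=.
  have [e|] := eqVneq j 1; have [e'|] := eqVneq j i => /=; try subst; lia.
- have [e|] := eqVneq j i0; have [e'|] := eqVneq j i => /=; try subst; try lia.
  by [].
Qed.
From Stdlib Require Import FunctionalExtensionality Classical.
Lemma mono g g' m : split_class m -> legal g m ->
  (forall j, 0 < removed m j -> g j <= g' j) -> legal g' m.
Proof.
case: m => i /= hs hl H.
- move/eqP: hs hl H => -> /= hl H; have := H 1 => /=; lia.
- have := split_idx hl; move: hl; have [e|ne] := eqVneq i 2 => /=.
  + subst; have := H 2 => /=; rewrite ?eqxx; lia.
  + case/andP=> a b _; have := H i; rewrite ?eqxx /=; lia.
Qed.
Lemma legal_after g m m0 : legal g m -> legal g m0 -> split_class m -> split_class m0 -> m <> m0 ->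
  legal (apply_move g m0) m.
Proof.
move=> l1 l2 s1 s2 ne; apply: (@mono g _ m s1 l1) => j hj.
have [h|h] := @disj g m m0 j l1 l2 s1 s2 ne; first lia.
rewrite /apply_move h; lia.
Qed.
Lemma commute g m m0 : legal g m -> legal g m0 -> split_class m -> split_class m0 -> m <> m0 ->
  apply_move (apply_move g m) m0 = apply_move (apply_move g m0) m.
Proof.
move=> l1 l2 s1 s2 ne; apply: functional_extensionality => j; rewrite /apply_move.
have := @rem_le g m j l1; have := @rem_le g m0 j l2; have := @disj g m m0 j l1 l2 s1 s2 ne; lia.
Qed.
Lemma sf_split g m : legal g m -> split_class m -> sf_ok g m.
Proof.
move=> l s; split=> //; split=> // H; exfalso; apply: H; by exists m.
Qed.
Lemma sf_uniq g m m0 : sf_ok g m -> sf_ok g m0 ->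
  m = m0 \/ [/\ legal g m, legal g m0, split_class m & split_class m0].
Proof.
move=> [l1 [a1 b1]] [l2 [a2 b2]].
case: (classic (exists m', legal g m' /\ split_class m')) => H.
- by right; split=> //; [apply: a1|apply: a2].
- left; have [i [e [hi Hi]]] := b1 H; have [i0 [e0 [hi0 Hi0]]] := b2 H; subst m m0.
  have [lt|ge] := ltnP i i0; first by have := Hi0 i hi lt; rewrite l1.
  move: ge; rewrite leq_eqVlt => /orP [/eqP -> //|lt].
  by have := Hi i0 hi0 lt; rewrite l2.
Qed.
Lemma main n : forall G P m, size P = n -> game_path G P -> follows_sf G P -> sf_ok G m ->
  exists rest : seq move,
    game_path G (m :: rest) /\ follows_sf G (m :: rest) /\
    size (m :: rest) = size P.
Proof.
elim: n => [|n IH] G [|m0 P] m //= hs hp hf hm.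
- by move: (hp m); case: hm => ->.
- case: hp => l0 hp; case: hf => f0 hf.
  have [e|[l1 l2 s1 s2]] := sf_uniq hm f0.
    by subst; exists P.
  case: (classic (m = m0)) => [e|ne]; first by subst; exists P.
  have hm1 : sf_ok (apply_move G m0) m by apply: sf_split => //; exact: legal_after.
  have [rest [[lm hr] [[_ fr] sr]]] := IH _ _ _ (eq_add_S _ _ hs) hp hf hm1.
  exists (m0 :: rest) => /=.
  have l0' : legal (apply_move G m) m0 by apply: legal_after => // e; apply: ne.
  rewrite commute //; split; [|split]; try done.
  + split=> //; split=> //; exact: sf_split.
  + by rewrite /= in sr; rewrite sr.
Qed.

Theorem lemma2p1 (G : state) (P : seq move) (m : move) :
  game_state G -> game_path G P -> follows_sf G P -> sf_ok G m ->
  exists rest : seq move,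
    game_path G (m :: rest) /\ follows_sf G (m :: rest) /\
    size (m :: rest) = size P.
Proof. move=> _; exact: (@main (size P) G P m erefl). Qed.
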